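(* Let $X$ be a Polish space with a fixed compatible metric $d$, $h:X\to\mathbb R$, and let $\alpha,\xi$ be countable ordinals. For every closed set $P\subseteq X$, the set $\Omega^\alpha_{h,\xi}(P)$ has property $(\alpha,\omega^{\omega^\xi}\cdot\alpha)$ with respect to $h$.
   Context: $B(x,\varepsilon)$ is the open $d$-ball. $D$-derivation: for $f$ defined on a closed set containing $F$, $\varepsilon>0$, closed $F$: $D^0(f,\varepsilon,F)=F$, $D^1(f,\varepsilon,F)$ = set of $x\in F$ such that every neighbourhood $U$ of $x$ contains $x_1,x_2\in F\cap U$ with $|f(x_1)-f(x_2)|\ge\varepsilon$, $D^{\alpha+1}=D^1(f,\varepsilon,D^\alpha(f,\varepsilon,F))$, intersections at limits. A closed set $P$ has property $(\xi,\zeta)$ with respect to $h$ if for every $x\in P$ and every $\varepsilon>0$ there are a closed set $Q\subseteq B(x,\varepsilon)$ and a function $g:Q\to\mathbb N$ such that $g=1$ on $D^\xi(g,1,Q)\cup\{x\}$ and $x\in D^\zeta(gh,1,Q)$. $A'$ = accumulation points of $A$ in $X$. For closed $P$ and $\varepsilon>0$, $O(h,\varepsilon,P)$ = set of $x\in P$ such that every neighbourhood of $x$ contains $y\in P$ with $|h(y)-h(x)|\ge\varepsilon$; $\delta(h,\varepsilon,P)=\overline{O(h,\varepsilon,P)}$, iterated ($\delta^0(P)=P$, successor by applying $\delta$, intersections at limits). For each countable $\xi$ a sequence $(\xi_n)$ strictly increasing to $\omega^{\omega^\xi}$ is fixed, $\Omega_{h,\xi}(P)=\bigcap_n\big[\bigcup_{\eta>0}\delta^{\xi_n}(h,\eta,P)\big]'$,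 and $\Omega^\alpha_{h,\xi}$ denotes its $\alpha$-th iterate (with $\Omega^0_{h,\xi}(P)=P$). *)

(* Defs.v *)
From Stdlib Require Import Reals.
Open Scope R_scope.

Definition is_metric {X : Type} (d : X -> X -> R) : Prop :=
  (forall x y, 0 <= d x y) /\
  (forall x y, d x y = 0 <-> x = y) /\
  (forall x y, d x y = d y x) /\
  (forall x y z, d x z <= d x y + d y z).

(* separable: a countable dense set (enumerated with possible gaps, so that
   the empty space is allowed) *)
Definition separable {X : Type} (d : X -> X -> R) : Prop :=
  exists e : nat -> option X,
    forall x r, 0 < r -> exists n y, e n = Some y /\ d x y < r.

Definition complete {X : Type} (d : X -> X -> R) : Prop :=
  forall u : nat -> X,
    (forall eps, 0 < eps -> exists N, forall m n, (N <= m)%nat -> (N <= n)%nat ->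
        d (u m) (u n) < eps) ->
    exists l, forall eps, 0 < eps -> exists N, forall n, (N <= n)%nat -> d (u n) l < eps.

Definition polish_metric {X : Type} (d : X -> X -> R) : Prop :=
  is_metric d /\ separable d /\ complete d.

Definition closed {X : Type} (d : X -> X -> R) (F : X -> Prop) : Prop :=
  forall x, (forall r, 0 < r -> exists y, F y /\ d x y < r) -> F x.

Definition closure {X : Type} (d : X -> X -> R) (A : X -> Prop) : X -> Prop :=
  fun x => forall r, 0 < r -> exists y, A y /\ d x y < r.

Definition derived {X : Type} (d : X -> X -> R) (A : X -> Prop) : X -> Prop :=
  fun x => forall r, 0 < r -> exists y, A y /\ y <> x /\ d x y < r.

(** * Countable ordinals as Brouwer trees *)

Inductive ord : Type :=
| OZ : ord
| OS : ord -> ord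
| OL : (nat -> ord) -> ord.   (* OL f = sup_n f n *)

(* order on the ordinal values denoted by trees *)
Inductive ole : ord -> ord -> Prop :=
| ole_Z b : ole OZ b
| ole_SS a b : ole a b -> ole (OS a) (OS b)
| ole_L_l f b : (forall n, ole (f n) b) -> ole (OL f) b
| ole_L_r a f n : ole a (f n) -> ole a (OL f).

Definition olt (a b : ord) : Prop := ole (OS a) b.
Definition oeq (a b : ord) : Prop := ole a b /\ ole b a.

Fixpoint ofin (n : nat) : ord :=
  match n with O => OZ | S n => OS (ofin n) end.

Definition oomega : ord := OL ofin.

Fixpoint oadd (a b : ord) : ord :=
  match b with
  | OZ => a
  | OS b => OS (oadd a b)
  | OL f => OL (fun n => oadd a (f n))
  end.

Fixpoint omul (a b : ord) : ord :=
  match b with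
  | OZ => OZ
  | OS b => oadd (omul a b) a
  | OL f => OL (fun n => omul a (f n))
  end.

Fixpoint oexp_omega (b : ord) : ord :=
  match b with
  | OZ => OS OZ
  | OS b => omul (oexp_omega b) oomega
  | OL f => OL (fun n => oexp_omega (f n))
  end.

Fixpoint iter {X : Type} (Phi : (X -> Prop) -> (X -> Prop)) (a : ord) (P : X -> Prop)
  : X -> Prop :=
  match a with
  | OZ => P
  | OS a => Phi (iter Phi a P)
  | OL f => fun x => forall n, iter Phi (f n) P x
  end.

Definition D1 {X : Type} (d : X -> X -> R) (f : X -> R) (eps : R) (F : X -> Prop)
  : X -> Prop :=
  fun x => F x /\ forall r, 0 < r -> exists x1 x2,
      F x1 /\ F x2 /\ d x x1 < r /\ d x x2 < r /\ Rabs (f x1 - f x2) >= eps.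

Definition Dder {X : Type} (d : X -> X -> R) (f : X -> R) (eps : R) (a : ord)
  (F : X -> Prop) : X -> Prop := iter (D1 d f eps) a F.

Definition has_property {X : Type} (d : X -> X -> R) (h : X -> R) (xi zeta : ord)
  (P : X -> Prop) : Prop :=
  forall x, P x -> forall eps, 0 < eps ->
    exists (Q : X -> Prop) (g : X -> nat),
      closed d Q /\ (forall y, Q y -> d x y < eps) /\
      (forall y, Dder d (fun z => INR (g z)) 1 xi Q y \/ y = x -> g y = 1%nat) /\
      Dder d (fun z => INR (g z) * h z) 1 zeta Q x.

Definition Oosc {X : Type} (d : X -> X -> R) (h : X -> R) (eps : R) (P : X -> Prop)
  : X -> Prop :=
  fun x => P x /\ forall r, 0 < r -> exists y, P y /\ d x y < r /\ Rabs (h y - h x) >= eps.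

Definition delta {X : Type} (d : X -> X -> R) (h : X -> R) (eps : R) (P : X -> Prop)
  : X -> Prop := closure d (Oosc d h eps P).

(* s is the fixed sequence (xi_n) increasing to omega^(omega^xi) *)
Definition Omega {X : Type} (d : X -> X -> R) (h : X -> R) (s : nat -> ord)
  (P : X -> Prop) : X -> Prop :=
  fun x => forall n,
    derived d (fun y => exists eta, 0 < eta /\ iter (delta d h eta) (s n) P y) x.

Definition Omega_iter {X : Type} (d : X -> X -> R) (h : X -> R) (s : nat -> ord)
  (a : ord) (P : X -> Prop) : X -> Prop := iter (Omega d h s) a P.

(* Main.v *)
Require Import Defs.
From Stdlib Require Import Reals Lra Lia ClassicalEpsilon Classical.
Open Scope R_scope.


Lemma ole_refl a : ole a a.
Proof. induction a; constructor; auto. intro n. eapply ole_L_r; eauto. Qed.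

Lemma ole_L1 f c : ole (OL f) c -> forall m, ole (f m) c.
Proof.
  intros H; remember (OL f) as a eqn:E; revert f E.
  induction H; intros g E m; try discriminate.
  - injection E as ->. auto.
  - eapply ole_L_r. eapply IHole; eauto.
Qed.

Lemma ole_trans a b c : ole a b -> ole b c -> ole a c.
Proof.
  intros H; revert c; induction H; intros c Hc.
  - constructor.
  - remember (OS b) as b' eqn:E; revert b E H IHole.
    induction Hc; intros b0 E Hb0 IH; try discriminate.
    + injection E as ->. constructor. auto.
    + eapply ole_L_r. eapply IHHc; eauto.
  - constructor; intro n; auto.
  - apply IHole. eapply ole_L1; eauto.
Qed.

Lemma ole_S a : ole a (OS a).
Proof.
  induction a.
  - constructor.
  - constructor; auto.
  - constructor; intro n. eapply ole_trans; [apply H|].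
    constructor. eapply ole_L_r; apply ole_refl.
Qed.

Lemma oadd_ge a b : ole a (oadd a b).
Proof.
  induction b; simpl.
  - apply ole_refl.
  - eapply ole_trans; [apply IHb| apply ole_S].
  - eapply ole_L_r with (n:=0%nat); auto.
Qed.

Lemma oadd_mono_l a a' c : ole a a' -> ole (oadd a c) (oadd a' c).
Proof.
  intro H; induction c; simpl; auto.
  - constructor; auto.
  - constructor; intro n. eapply ole_L_r; eauto.
Qed.

Lemma oadd_mono_r a b b' : ole b b' -> ole (oadd a b) (oadd a b').
Proof.
  intro H; induction H; simpl.
  - apply oadd_ge.
  - constructor; auto.
  - constructor; auto.
  - eapply ole_L_r; eauto.
Qed.

Lemma omul_mono_r a b b' : ole b b' -> ole (omul a b) (omul a b').
Proof.
  intro H; induction H; simpl.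
  - constructor.
  - apply oadd_mono_l; auto.
  - constructor; auto.
  - eapply ole_L_r; eauto.
Qed.

Lemma ole_total a b : ole a b \/ ole (OS b) a.
Proof.
  revert b; induction a as [|a IHa|f IHf]; intro b.
  - left; constructor.
  - induction b as [|b IHb|g IHg].
    + right. constructor. constructor.
    + destruct (IHa b) as [H|H].
      * left; constructor; auto.
      * right; constructor; auto.
    + destruct (classic (exists m, ole (OS a) (g m))) as [[m Hm]|Hn].
      * left; eapply ole_L_r; eauto.
      * right. constructor. constructor. intro m.
        destruct (IHg m) as [H|H]; [exfalso; eauto|].
        inversion H; subst; auto.
  - destruct (classic (forall n, ole (f n) b)) as [H|H].
    + left; constructor; auto.
    + right. apply not_all_ex_not in H. destruct H as [n Hn].
      destruct (IHf n b) as [H|H]; [contradiction|].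
      eapply ole_L_r; eauto.
Qed.

Lemma lim_split (f : nat -> ord) :
  (exists n, ole (OL f) (f n)) \/ (forall n, exists m, ole (OS (f n)) (f m)).
Proof.
  destruct (classic (exists n, forall m, ole (f m) (f n))) as [[n Hn]|H].
  - left. exists n. constructor; auto.
  - right. intro n. destruct (classic (exists m, ole (OS (f n)) (f m))) as [Hm|Hm]; auto.
    exfalso. apply H. exists n. intro m.
    destruct (ole_total (f m) (f n)) as [H1|H1]; auto.
    exfalso; eauto.
Qed.

Section Iter.
Context {X : Type} (Phi : (X -> Prop) -> (X -> Prop)) (C : (X -> Prop) -> Prop).
Hypothesis Hmono : forall A B : X -> Prop, (forall x, A x -> B x) -> forall x, Phi A x -> Phi B x.
Hypothesis HC : forall A, C A -> C (Phi A).
Hypothesis HCi : forall fam : nat -> X -> Prop, (forall n, C (fam n)) -> C (fun x => forall n, fam n x).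
Hypothesis Hsub : forall A, C A -> forall x, Phi A x -> A x.

Lemma iter_mono a (A B : X -> Prop) : (forall x, A x -> B x) -> forall x, iter Phi a A x -> iter Phi a B x.
Proof. intro H; induction a; simpl; eauto. Qed.

Lemma iter_C a P : C P -> C (iter Phi a P).
Proof. intro H; induction a; simpl; auto. Qed.

Lemma iter_sub a P : C P -> forall x, iter Phi a P x -> P x.
Proof.
  intros HP; induction a; simpl; intros x Hx; auto.
  apply IHa. eapply Hsub; [apply iter_C; auto| eauto].
  eapply H. apply (Hx 0%nat).
Qed.

Lemma iter_ole a b P : C P -> ole a b -> forall x, iter Phi b P x -> iter Phi a P x.
Proof.
  intros HP H; induction H; simpl; intros x Hx.
  - eapply iter_sub; eauto.
  - eapply Hmono; eauto.
  - auto.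
  - apply IHole. auto.
Qed.
Lemma iter_add a b P x :
  iter Phi (oadd a b) P x <-> iter Phi b (iter Phi a P) x.
Proof.
  revert x; induction b; simpl; intro x.
  - tauto.
  - split; apply Hmono; intro y; apply IHb.
  - split; intros H0 n; apply H; auto.
Qed.
End Iter.



Section Met.
Context {X : Type} (d : X -> X -> R) (Hm : is_metric d).

Lemma d_pos x y : 0 <= d x y. Proof. apply Hm. Qed.
Lemma d_refl x : d x x = 0. Proof. apply Hm. auto. Qed.
Lemma d_sym x y : d x y = d y x. Proof. apply Hm. Qed.
Lemma d_tri x y z : d x z <= d x y + d y z. Proof. apply Hm. Qed.
Lemma d_neq x y : x <> y -> 0 < d x y.
Proof.
  intro H. destruct (Rle_lt_or_eq_dec 0 (d x y) (d_pos x y)) as [H1|H1]; auto.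
  exfalso; apply H. apply Hm. auto.
Qed.
Lemma d_eq0 x y : (forall r, 0 < r -> d x y < r) -> x = y.
Proof.
  intro H. apply Hm. destruct (Rle_lt_or_eq_dec 0 (d x y) (d_pos x y)) as [H1|H1]; auto.
  specialize (H _ H1). lra.
Qed.

Lemma closed_inter (fam : nat -> X -> Prop) : (forall n, closed d (fam n)) -> closed d (fun x => forall n, fam n x).
Proof.
  intros H x Hx n. apply H. intros r Hr. destruct (Hx r Hr) as [y [Hy Hd]]. eauto.
Qed.

Lemma closure_closed A : closed d (closure d A).
Proof.
  intros x Hx r Hr. destruct (Hx (r/2)) as [y [Hy Hd]]; [lra|].
  destruct (Hy (r/2)) as [z [Hz Hd2]]; [lra|].
  exists z; split; auto. pose proof (d_tri x y z). lra.
Qed.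

Lemma closure_sub A : closed d A -> forall x, closure d A x -> A x.
Proof. intros H x Hx. apply H. exact Hx. Qed.

Lemma closure_mono (A B : X -> Prop) : (forall x, A x -> B x) -> forall x, closure d A x -> closure d B x.
Proof. intros H x Hx r Hr. destruct (Hx r Hr) as [y [Hy Hd]]; eauto. Qed.

Lemma derived_closed A : closed d (derived d A).
Proof.
  intros x Hx r Hr. destruct (Hx (r/2)) as [p [Hp Hd]]; [lra|].
  destruct (classic (p = x)) as [->|Hpx].
  - apply Hp; lra.
  - pose proof (d_neq _ _ Hpx) as Hpos.
    destruct (Hp (Rmin (r/2) (d p x))) as [y [Hy [Hyp Hdy]]].
    { apply Rmin_pos; lra. }
    exists y. split; auto.
    pose proof (Rmin_l (r/2) (d p x)); pose proof (Rmin_r (r/2) (d p x)).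
    split.
    + intro E; subst y. lra.
    + pose proof (d_tri x p y). lra.
Qed.

Lemma derived_mono (A B : X -> Prop) : (forall x, A x -> B x) -> forall x, derived d A x -> derived d B x.
Proof. intros H x Hx r Hr. destruct (Hx r Hr) as [y [Hy Hd]]; eauto. Qed.

Lemma derived_closure A x : derived d A x -> closure d A x.
Proof. intros H r Hr. destruct (H r Hr) as [y [Hy [_ Hd]]]; eauto. Qed.

Lemma D1_mono f e (A B : X -> Prop) : (forall x, A x -> B x) -> forall x, D1 d f e A x -> D1 d f e B x.
Proof.
  intros H x [Hx Hr]. split; auto. intros r Hr0.
  destruct (Hr r Hr0) as [x1 [x2 [? [? [? [? ?]]]]]]. exists x1, x2; auto 7.
Qed.

Lemma D1_sub f e A x : D1 d f e A x -> A x.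
Proof. intros [H _]; auto. Qed.

Lemma D1_closed f e A : closed d A -> closed d (D1 d f e A).
Proof.
  intros HA x Hx. split.
  - apply HA. intros r Hr. destruct (Hx r Hr) as [y [Hy Hd]]. exists y; split; auto. apply Hy.
  - intros r Hr. destruct (Hx (r/2)) as [y [[_ Hy] Hd]]; [lra|].
    destruct (Hy (r/2)) as [x1 [x2 [? [? [? [? ?]]]]]]; [lra|].
    exists x1, x2. repeat split; auto.
    + pose proof (d_tri x y x1); lra.
    + pose proof (d_tri x y x2); lra.
Qed.

Lemma Dder_mono f e b (A B : X -> Prop) : (forall x, A x -> B x) -> forall x, Dder d f e b A x -> Dder d f e b B x.
Proof. apply iter_mono. apply D1_mono. Qed.

Lemma Dder_sub f e b A x : Dder d f e b A x -> A x.
Proof.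
  apply (iter_sub _ (fun _ => True)); auto.
  intros. eapply D1_sub; eauto.
Qed.

Lemma Dder_ole f e a b A x : ole a b -> Dder d f e b A x -> Dder d f e a A x.
Proof.
  intro H. apply (iter_ole _ (fun _ => True) (D1_mono f e) (fun _ _ => I) (fun _ _ => I)
    (fun A _ => D1_sub f e A) a b A I H).
Qed.

Lemma Dder_closed f e b A : closed d A -> closed d (Dder d f e b A).
Proof.
  apply (iter_C _ (closed d)).
  - apply D1_closed.
  - apply closed_inter.
Qed.

Lemma Dder_add f e a b A x : Dder d f e (oadd a b) A x <-> Dder d f e b (Dder d f e a A) x.
Proof. apply iter_add. apply D1_mono. Qed.

Lemma Dder_ext f1 f2 e b A : (forall p, A p -> f1 p = f2 p) ->
  forall x, Dder d f1 e b A x <-> Dder d f2 e b A x.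
Proof.
  intro H. induction b as [|b IH|g IH]; simpl; intro x.
  - tauto.
  - unfold D1. split; intros [H1 H2]; (split; [apply IH; auto|]);
    intros r Hr; destruct (H2 r Hr) as [x1 [x2 [? [? [? [? ?]]]]]];
    exists x1, x2; repeat split; try apply IH; auto.
    + rewrite <- !H by (eapply Dder_sub; eauto). auto.
    + rewrite !H by (eapply Dder_sub; apply IH; eauto). auto.
  - split; intros H0 n; apply IH; apply (H0 n).
Qed.

Lemma Dder_dom f1 f2 e b A : (forall x1 x2, Rabs (f1 x1 - f1 x2) >= e -> Rabs (f2 x1 - f2 x2) >= e) ->
  forall x, Dder d f1 e b A x -> Dder d f2 e b A x.
Proof.
  intro H. unfold Dder. induction b as [|b IH|g IH]; simpl; intros x Hx; auto.
  eapply D1_mono; [apply IH|].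
  destruct Hx as [H1 H2]. split; auto. intros r Hr.
  destruct (H2 r Hr) as [x1 [x2 [? [? [? [? ?]]]]]]. exists x1, x2; auto 7.
Qed.

Lemma Dder_local f e b (F G : X -> Prop) c0 rho :
  (forall p, d c0 p < rho -> (F p <-> G p)) ->
  forall p, d c0 p < rho -> (Dder d f e b F p <-> Dder d f e b G p).
Proof.
  intro H. unfold Dder. induction b as [|b IH|g IH]; simpl; intros p Hp.
  - auto.
  - assert (Hpos : 0 < rho - d c0 p) by lra.
    assert (Hloc : forall q, d p q < rho - d c0 p -> d c0 q < rho).
    { intros q Hq. pose proof (d_tri c0 p q). lra. }
    unfold D1. split; intros [H1 H2]; (split; [apply IH; auto|]);
    intros r Hr; destruct (H2 (Rmin r (rho - d c0 p))) as [x1 [x2 [? [? [? [? ?]]]]]];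
    try (apply Rmin_pos; lra);
    pose proof (Rmin_l r (rho - d c0 p)); pose proof (Rmin_r r (rho - d c0 p));
    exists x1, x2; repeat split; try lra; auto.
    all: try (apply IH; [apply Hloc; lra|]; auto).
  - split; intros H0 n; apply IH; auto.
Qed.

Lemma Oosc_mono h eta (A B : X -> Prop) : (forall x, A x -> B x) -> forall x, Oosc d h eta A x -> Oosc d h eta B x.
Proof.
  intros H x [Hx Hr]. split; auto. intros r Hr0. destruct (Hr r Hr0) as [y [? [? ?]]]; eauto.
Qed.

Lemma delta_mono h eta (A B : X -> Prop) : (forall x, A x -> B x) -> forall x, delta d h eta A x -> delta d h eta B x.
Proof. intros H. apply closure_mono. apply Oosc_mono; auto. Qed.

Lemma delta_sub h eta A : closed d A -> forall x, delta d h eta A x -> A x.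
Proof.
  intros HA x Hx. apply (closure_sub _ HA). eapply closure_mono; [|apply Hx].
  intros y [Hy _]; auto.
Qed.

Lemma iter_delta_closed h eta b A : closed d A -> closed d (iter (delta d h eta) b A).
Proof. apply (iter_C _ (closed d)); [intros; apply closure_closed| apply closed_inter]. Qed.

Lemma iter_delta_sub h eta b A x : closed d A -> iter (delta d h eta) b A x -> A x.
Proof.
  intro HA. apply (iter_sub _ (closed d)); auto.
  - intros; apply closure_closed.
  - apply closed_inter.
  - apply delta_sub.
Qed.

Lemma iter_delta_ole h eta a b A x : closed d A -> ole a b -> iter (delta d h eta) b A x -> iter (delta d h eta) a A x.
Proof.
  intros HA Hab. apply (iter_ole _ (closed d) (delta_mono h eta) (fun A _ => closure_closed _)
    closed_inter (delta_sub h eta) a b A HA Hab).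
Qed.

Lemma Omega_mono h s (A B : X -> Prop) : (forall x, A x -> B x) -> forall x, Omega d h s A x -> Omega d h s B x.
Proof.
  intros H x Hx n. eapply derived_mono; [|apply (Hx n)].
  intros y [eta [He Hy]]. exists eta. split; auto. eapply iter_mono; [apply delta_mono|apply H|auto].
Qed.

Lemma Omega_closed h s A : closed d (Omega d h s A).
Proof. apply closed_inter. intro n. apply derived_closed. Qed.

Lemma Omega_derived h s A : closed d A -> forall x, Omega d h s A x -> derived d A x.
Proof.
  intros HA x Hx. eapply derived_mono; [|apply (Hx 0%nat)].
  intros y [eta [_ Hy]]. eapply iter_delta_sub; eauto.
Qed.

Lemma Omega_sub h s A : closed d A -> forall x, Omega d h s A x -> A x.
Proof.
  intros HA x Hx. apply (closure_sub _ HA). apply derived_closure. eapply Omega_derived; eauto.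
Qed.

Lemma Omega_iter_closed h s b A : closed d A -> closed d (iter (Omega d h s) b A).
Proof. apply (iter_C _ (closed d)); [intros; apply Omega_closed| apply closed_inter]. Qed.

Lemma Omega_iter_ole h s a b A x : closed d A -> ole a b -> iter (Omega d h s) b A x -> iter (Omega d h s) a A x.
Proof.
  intros HA Hab. apply (iter_ole _ (closed d) (Omega_mono h s) (fun A _ => Omega_closed h s A)
    closed_inter (Omega_sub h s) a b A HA Hab).
Qed.

End Met.


Definition cyc (k : nat) : nat := (k - Nat.sqrt k * Nat.sqrt k)%nat.

Lemma cyc_spec n m : (n <= m)%nat -> cyc (m*m + n) = n.
Proof.
  intro H. unfold cyc. rewrite (Nat.sqrt_unique (m*m+n) m); [lia|]. nia.
Qed.

Section Glue.
Context {X : Type} (d : X -> X -> R) (Hm : is_metric d).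
Variables (c : X) (zs : nat -> X) (Qs : nat -> X -> Prop).
Let r k := d c (zs k).
Hypothesis F1 : forall k, 0 < r k.
Hypothesis F2 : forall k, r (S k) <= r k / 10.
Hypothesis F3 : forall k p, Qs k p -> d (zs k) p < r k / 10.
Hypothesis F4 : forall k, closed d (Qs k).

Lemma r_dec i m : r (m + i)%nat <= r i.
Proof.
  induction m; simpl. lra. pose proof (F2 (m+i)%nat). pose proof (F1 (m+i)%nat). lra.
Qed.

Lemma r_lt i j : (i < j)%nat -> r j <= r i / 10.
Proof.
  intro H. replace j with ((j - S i) + S i)%nat by lia.
  pose proof (r_dec (S i) (j - S i)). pose proof (F2 i). lra.
Qed.

Lemma ann k p : Qs k p -> 9/10 * r k < d c p /\ d c p < 11/10 * r k.
Proof.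
  intro H. pose proof (F3 k p H). unfold r in *.
  pose proof (d_tri d Hm c (zs k) p). pose proof (d_tri d Hm c p (zs k)).
  rewrite (d_sym d Hm p (zs k)) in *. lra.
Qed.

Lemma uniq i j p : Qs i p -> Qs j p -> i = j.
Proof.
  intros Hi Hj. pose proof (ann i p Hi). pose proof (ann j p Hj).
  pose proof (F1 i); pose proof (F1 j).
  destruct (Nat.lt_trichotomy i j) as [Hlt|[Hlt|Hlt]]; auto.
  - pose proof (r_lt i j Hlt). lra.
  - pose proof (r_lt j i Hlt). lra.
Qed.

Definition Qglue : X -> Prop := fun p => p = c \/ exists k, Qs k p.

Lemma Qglue_closed : closed d Qglue.
Proof.
  intros p Hp. destruct (classic (p = c)) as [->|Hpc]; [left; auto|].
  pose proof (d_neq d Hm _ _ (not_eq_sym Hpc)) as Ht.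
  assert (Hnear : forall q, Qglue q -> d p q < (d c p)/10 -> exists k, Qs k q /\ 9/10*(d c p) < d c q < 11/10*(d c p)).
  { intros q [->|[k Hk]] Hq.
    - rewrite (d_sym d Hm p c) in Hq. lra.
    - exists k; split; auto. pose proof (d_tri d Hm c p q). pose proof (d_tri d Hm c q p).
      rewrite (d_sym d Hm q p) in *. lra. }
  destruct (Hp ((d c p)/10)) as [q [Hq Hdq]]; [lra|].
  destruct (Hnear q Hq Hdq) as [j [Hj Hj']].
  right. exists j. apply (F4 j). intros rr Hrr.
  destruct (Hp (Rmin rr ((d c p)/10))) as [q' [Hq' Hdq']]; [apply Rmin_pos; lra|].
  pose proof (Rmin_l rr ((d c p)/10)); pose proof (Rmin_r rr ((d c p)/10)).
  destruct (Hnear q' Hq' ltac:(lra)) as [i [Hi Hi']].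
  exists q'. split; [|lra].
  replace j with i; auto.
  pose proof (ann i q' Hi). pose proof (ann j q Hj). pose proof (F1 i); pose proof (F1 j).
  destruct (Nat.lt_trichotomy i j) as [Hlt|[Hlt|Hlt]]; auto.
  - pose proof (r_lt i j Hlt). lra.
  - pose proof (r_lt j i Hlt). lra.
Qed.

Lemma Qglue_local k q : d (zs k) q < r k / 2 -> (Qglue q <-> Qs k q).
Proof.
  intro Hq. split.
  - intros [->|[j Hj]].
    + exfalso. unfold r in Hq. rewrite (d_sym d Hm) in Hq. pose proof (F1 k). unfold r in *. lra.
    + replace k with j; auto.
      pose proof (ann j q Hj). pose proof (F1 j); pose proof (F1 k).
      pose proof (d_tri d Hm c (zs k) q). pose proof (d_tri d Hm c q (zs k)).
      rewrite (d_sym d Hm q (zs k)) in *. fold (r k) in *.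
      destruct (Nat.lt_trichotomy j k) as [Hlt|[Hlt|Hlt]]; auto.
      * pose proof (r_lt j k Hlt). lra.
      * pose proof (r_lt k j Hlt). lra.
  - intro H; right; eauto.
Qed.

Lemma Qglue_Dder f e b p : Dder d f e b Qglue p -> p = c \/ exists k, Dder d f e b (Qs k) p.
Proof.
  intro H. pose proof (Dder_sub d f e b Qglue p H) as [Hp|[k Hk]]; [left; auto|right].
  exists k. pose proof (F3 k p Hk). pose proof (F1 k).
  apply (Dder_local d Hm f e b Qglue (Qs k) (zs k) (r k / 2)); auto.
  - intros q Hq. apply Qglue_local; auto.
  - lra.
Qed.

Lemma Qglue_small p : Qglue p -> d c p < 2 * r 0.
Proof.
  intros [->|[k Hk]].
  - rewrite (d_refl d Hm). pose proof (F1 0). lra.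
  - pose proof (ann k p Hk). pose proof (r_dec 0 k). rewrite Nat.add_0_r in *. pose proof (F1 k). lra.
Qed.

Lemma r_bound k : r k * (INR k + 1) <= r 0.
Proof.
  induction k. simpl. lra.
  rewrite S_INR. pose proof (F2 k). pose proof (F1 k). pose proof (F1 (S k)). pose proof (pos_INR k).
  nra.
Qed.

Lemma r_small rho : 0 < rho -> exists K, forall k, (K <= k)%nat -> r k < rho.
Proof.
  intro H. destruct (INR_archimed rho (r 0) H) as [K HK]. exists K. intros k Hk.
  pose proof (r_bound k). apply le_INR in Hk. pose proof (F1 k). pose proof (F1 0).
  assert (r k * INR K <= r k * INR k) by (apply Rmult_le_compat_l; lra).
  destruct (Rlt_or_le (r k) rho) as [?|Hc]; auto.
  assert (rho * INR K <= r k * INR K) by (apply Rmult_le_compat_r; [apply pos_INR|lra]). lra.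
Qed.

Lemma r_cyc n rho : 0 < rho -> exists k, cyc k = n /\ r k < rho.
Proof.
  intro H. destruct (r_small rho H) as [K HK].
  exists (Nat.max n K * Nat.max n K + n)%nat. split.
  - apply cyc_spec. lia.
  - apply HK. nia.
Qed.

End Glue.


Section Core.
Context {X : Type} (d : X -> X -> R) (Hm : is_metric d).

Lemma seq_exists (c : X) eps (Pk : nat -> X -> (X -> Prop) -> (X -> nat) -> Prop) :
  0 < eps ->
  (forall k r, 0 < r -> exists z Q g, z <> c /\ d c z < r /\ closed d Q /\
      (forall p, Q p -> d z p < d c z / 10) /\ Pk k z Q g) ->
  exists zs Qs gs, (forall k, zs k <> c) /\ (forall k, d c (zs (S k)) <= d c (zs k) / 10) /\
    (forall k p, Qs k p -> d (zs k) p < d c (zs k) / 10) /\ (forall k, closed d (Qs k)) /\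
    d c (zs 0%nat) < eps /\ (forall k, Pk k (zs k) (Qs k) (gs k)).
Proof.
  intros He H.
  pose (spec := fun k r (t : X * (X -> Prop) * (X -> nat)) =>
    fst (fst t) <> c /\ d c (fst (fst t)) < r /\ closed d (snd (fst t)) /\
    (forall p, snd (fst t) p -> d (fst (fst t)) p < d c (fst (fst t)) / 10) /\
    Pk k (fst (fst t)) (snd (fst t)) (snd t)).
  pose (t0 := (c, (fun _ : X => False), (fun _ : X => 0%nat))).
  pose (sel := fun k r => epsilon (inhabits t0) (fun t => 0 < r -> spec k r t)).
  assert (Hsel : forall k r, 0 < r -> spec k r (sel k r)).
  { intros k r Hr. unfold sel.
    assert (E : exists t, 0 < r -> spec k r t).
    { destruct (H k r Hr) as [z [Q [g Hz]]]. exists (z, Q, g). intros _. exact Hz. }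
    exact (@epsilon_spec _ _ (fun t => 0 < r -> spec k r t) E Hr). }
  pose (rad := fix rad k := match k with O => eps | S k' => d c (fst (fst (sel k' (rad k')))) / 10 end).
  assert (Hr : forall k, 0 < rad k /\ spec k (rad k) (sel k (rad k))).
  { induction k.
    - simpl. split; [auto| apply Hsel; auto].
    - destruct IHk as [H1 H2]. assert (0 < rad (S k)).
      { simpl. destruct H2 as [H2 _]. pose proof (d_neq d Hm _ _ (not_eq_sym H2)). fold (rad k). lra. }
      split; auto. }
  exists (fun k => fst (fst (sel k (rad k)))), (fun k => snd (fst (sel k (rad k)))),
    (fun k => snd (sel k (rad k))).
  repeat split; intros.
  - apply (Hr k).
  - destruct (Hr (S k)) as [_ [_ [Hd _]]].
    assert (E : rad (S k) = d c (fst (fst (sel k (rad k)))) / 10) by reflexivity.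
    rewrite E in Hd at 2. lra.
  - destruct (Hr k) as [_ [_ [_ [_ [Hq _]]]]]. apply Hq; auto.
  - apply (Hr k).
  - destruct (Hr 0%nat) as [_ [_ [Hd _]]]. simpl in Hd. exact Hd.
  - apply (Hr k).
Qed.

Lemma core_glue (c : X) (v : nat) eps (Pk : nat -> X -> (X -> Prop) -> (X -> nat) -> Prop) :
  0 < eps ->
  (forall k r, 0 < r -> exists z Q g, z <> c /\ d c z < r /\ closed d Q /\
      (forall p, Q p -> d z p < d c z / 10) /\ Pk k z Q g) ->
  exists zs Qs gs (Q : X -> Prop) (G : X -> nat),
    (forall k, Pk k (zs k) (Qs k) (gs k)) /\
    closed d Q /\ Q c /\ (forall p, Q p -> d c p < eps) /\ G c = v /\
    (forall k p, Qs k p -> Q p /\ G p = gs k p) /\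
    (forall f e b p, Dder d f e b Q p -> p = c \/ exists k, Dder d f e b (Qs k) p) /\
    (forall n rho, 0 < rho -> exists k, cyc k = n /\ d c (zs k) < rho).
Proof.
  intros He H.
  destruct (seq_exists c (eps/2) Pk ltac:(lra) H) as [zs [Qs [gs [F1 [F2 [F3 [F4 [F5 F6]]]]]]]].
  assert (F1' : forall k, 0 < d c (zs k)) by (intro k; apply d_neq; auto).
  pose (G := fun p => if excluded_middle_informative (p = c) then v
                      else gs (epsilon (inhabits 0%nat) (fun k => Qs k p)) p).
  exists zs, Qs, gs, (Qglue c Qs), G.
  split; [auto|]. split; [apply (Qglue_closed d Hm c zs Qs F1' F2 F3 F4)|].
  split; [left; auto|]. split.
  { intros p Hp. pose proof (Qglue_small d Hm c zs Qs F1' F2 F3 p Hp). lra. }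
  split. { unfold G. destruct (excluded_middle_informative (c = c)); auto; congruence. }
  split.
  { intros k p Hp. split; [right; eauto|]. unfold G. destruct (excluded_middle_informative (p = c)) as [->|Hpc].
    + exfalso. pose proof (F3 k c Hp) as H0. rewrite (d_sym d Hm) in H0. pose proof (F1' k). lra.
    + f_equal. symmetry. eapply (uniq d Hm c zs Qs F1' F2 F3); eauto.
      apply (@epsilon_spec _ _ (fun k => Qs k p)). eauto. }
  split.
  { intros f e b p Hp. apply (Qglue_Dder d Hm c zs Qs F1' F2 F3 f e b p Hp). }
  intros n rho Hrho. apply (r_cyc d c zs F1' F2 n rho Hrho).
Qed.

End Core.


Lemma nat_dist (m n : nat) : m <> n -> Rabs (INR m - INR n) >= 1.
Proof.
  intro H. destruct (Nat.lt_total m n) as [Hl|[Hl|Hl]]; [|contradiction|].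
  - pose proof (le_INR _ _ Hl) as H1. rewrite S_INR in H1.
    rewrite Rabs_left by lra. lra.
  - pose proof (le_INR _ _ Hl) as H1. rewrite S_INR in H1. rewrite Rabs_right by lra. lra.
Qed.

Lemma scale_abs (N : nat) a b : Rabs (INR N * a - INR N * b) = INR N * Rabs (a - b).
Proof.
  replace (INR N * a - INR N * b) with (INR N * (a - b)) by ring.
  rewrite Rabs_mult. rewrite (Rabs_right (INR N)); auto. apply Rle_ge, pos_INR.
Qed.

Section Cp.
Context {X : Type} (d : X -> X -> R) (Hm : is_metric d) (h : X -> R).
Variables (F : X -> Prop) (a b : ord) (eta : R) (N : nat).
Hypothesis HF : closed d F.
Hypothesis Hprop : has_property d h a b F.
Hypothesis Heta : 0 < eta.
Hypothesis HN : 1 <= INR N * eta.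
Hypothesis HN1 : (1 <= N)%nat.

Definition Good (be : ord) (y : X) : Prop :=
  forall rho, 0 < rho -> exists (Q : X -> Prop) (g : X -> nat), closed d Q /\
    (forall p, Q p -> d y p < rho) /\ g y = N /\
    (forall p, Dder d (fun z => INR (g z)) 1 a Q p -> g p = N) /\
    Dder d (fun z => INR (g z) * h z) 1 (oadd b be) Q y.

Lemma INRN1 : 1 <= INR N.
Proof. apply le_INR in HN1. simpl in HN1. exact HN1. Qed.

Lemma Good_base y : F y -> Good OZ y.
Proof.
  intros Hy rho Hrho. destruct (Hprop y Hy rho Hrho) as [Q [g0 [HQ [Hin [Hg HD]]]]].
  exists Q, (fun z => (N * g0 z)%nat). split; auto. split; auto.
  split; [rewrite Hg; [lia| right; auto]|]. split.
  - intros p Hp. rewrite Hg; [lia|]. left.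
    revert Hp. apply Dder_dom. intros x1 x2 Hx.
    destruct (Nat.eq_dec (g0 x1) (g0 x2)) as [E|E].
    + rewrite E in Hx. replace (INR (N * g0 x2) - INR (N * g0 x2)) with 0 in Hx by ring.
      rewrite Rabs_R0 in Hx. lra.
    + apply nat_dist; auto.
  - simpl. revert HD. apply Dder_dom. intros x1 x2 Hx. rewrite !mult_INR.
    replace (INR N * INR (g0 x1) * h x1 - INR N * INR (g0 x2) * h x2)
      with (INR N * (INR (g0 x1) * h x1) - INR N * (INR (g0 x2) * h x2)) by ring.
    rewrite scale_abs. pose proof INRN1. pose proof (Rabs_pos (INR (g0 x1) * h x1 - INR (g0 x2) * h x2)). nra.
Qed.

Lemma Good_ole be be' y : ole be be' -> Good be' y -> Good be y.
Proof.
  intros Hle HG rho Hrho. destruct (HG rho Hrho) as [Q [g [? [? [? [? HD]]]]]].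
  exists Q, g. repeat split; auto. eapply Dder_ole; [|apply HD]. apply oadd_mono_r; auto.
Qed.

Lemma GL y (bes : nat -> ord) be :
  (forall Q f x, (forall n, Dder d f 1 (oadd b (bes n)) Q x) -> Dder d f 1 (oadd b be) Q x) ->
  (forall n r, 0 < r -> exists z, z <> y /\ d y z < r /\ Good (bes n) z) -> Good be y.
Proof.
  intros Hlim Hpts rho Hrho.
  destruct (core_glue d Hm y N rho (fun k z Q g => g z = N /\
     (forall p, Dder d (fun z => INR (g z)) 1 a Q p -> g p = N) /\
     Dder d (fun z => INR (g z) * h z) 1 (oadd b (bes (cyc k))) Q z) Hrho)
    as [zs [Qs [gs [Q [G [HP [HQc [HQy [HQs [HGc [HQk [HD Hcyc]]]]]]]]]]]].
  { intros k r Hr. destruct (Hpts (cyc k) r Hr) as [z [Hz [Hdz HG]]].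
    pose proof (d_neq d Hm _ _ (not_eq_sym Hz)).
    destruct (HG (d y z / 10)) as [Q [g [? [? [? [? ?]]]]]]; [lra|].
    exists z, Q, g. repeat split; auto. }
  exists Q, G. split; auto. split; auto. split; auto. split.
  - intros p Hp. destruct (HD _ _ _ _ Hp) as [->|[k Hk]]; auto.
    pose proof (Dder_sub d _ _ _ _ _ Hk) as Hpk. destruct (HQk k p Hpk) as [_ E]. rewrite E.
    destruct (HP k) as [_ [HPk _]]. apply HPk.
    apply (Dder_ext d (fun z => INR (G z))); auto.
    intros q Hq. destruct (HQk k q Hq) as [_ E2]. rewrite E2; auto.
  - apply Hlim. intro n. apply (Dder_closed d Hm _ _ _ _ HQc). intros rr Hrr.
    destruct (Hcyc n rr Hrr) as [k [Hk Hdk]]. exists (zs k). split; auto.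
    destruct (HP k) as [_ [_ HDk]]. rewrite Hk in HDk.
    apply (Dder_mono d _ _ _ (Qs k) Q); [intros q Hq; apply (HQk k q Hq)|].
    apply (Dder_ext d (fun z => INR (gs k z) * h z)); auto.
    intros q Hq. destruct (HQk k q Hq) as [_ E2]. rewrite E2; auto.
Qed.

Lemma OscG ga (T : X -> Prop) : (forall z, T z -> Good ga z) ->
  forall z, Oosc d h eta T z -> Good (OS ga) z.
Proof.
  intros HT z [Hz Hosc] rho Hrho.
  destruct (core_glue d Hm z N rho (fun k w Q g => g w = N /\
     (forall p, Dder d (fun z => INR (g z)) 1 a Q p -> g p = N) /\
     Dder d (fun z => INR (g z) * h z) 1 (oadd b ga) Q w /\ Rabs (h w - h z) >= eta) Hrho)
    as [zs [Qs [gs [Q [G [HP [HQc [HQy [HQs [HGc [HQk [HD Hcyc]]]]]]]]]]]].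
  { intros k r Hr. destruct (Hosc r Hr) as [w [Hw [Hdw Hhw]]].
    assert (Hwz : w <> z). { intro E; subst w. replace (h z - h z) with 0 in Hhw by ring.
      rewrite Rabs_R0 in Hhw. lra. }
    pose proof (d_neq d Hm _ _ (not_eq_sym Hwz)).
    destruct (HT w Hw (d z w / 10)) as [Q [g [? [? [? [? ?]]]]]]; [lra|].
    exists w, Q, g. repeat split; auto. }
  exists Q, G. split; auto. split; auto. split; auto. split.
  - intros p Hp. destruct (HD _ _ _ _ Hp) as [->|[k Hk]]; auto.
    pose proof (Dder_sub d _ _ _ _ _ Hk) as Hpk. destruct (HQk k p Hpk) as [_ E]. rewrite E.
    destruct (HP k) as [_ [HPk _]]. apply HPk.
    apply (Dder_ext d (fun z => INR (G z))); auto.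
    intros q Hq. destruct (HQk k q Hq) as [_ E2]. rewrite E2; auto.
  - set (f := fun z => INR (G z) * h z).
    assert (Hpt : forall k, Dder d f 1 (oadd b ga) Q (zs k) /\ G (zs k) = N /\ Rabs (h (zs k) - h z) >= eta).
    { intro k. destruct (HP k) as [HgN [_ [HDk Hhk]]].
      pose proof (Dder_sub d _ _ _ _ _ HDk) as Hk. destruct (HQk k _ Hk) as [_ E].
      split; [|split; auto; congruence].
      apply (Dder_mono d _ _ _ (Qs k) Q); [intros q Hq; apply (HQk k q Hq)|].
      apply (Dder_ext d (fun z => INR (gs k z) * h z)); auto.
      intros q Hq. destruct (HQk k q Hq) as [_ E2]. unfold f. rewrite E2; auto. }
    assert (HA : Dder d f 1 (oadd b ga) Q z).
    { apply (Dder_closed d Hm _ _ _ _ HQc). intros rr Hrr.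
      destruct (Hcyc 0%nat rr Hrr) as [k [_ Hdk]]. exists (zs k). split; auto. apply Hpt. }
    change (D1 d f 1 (Dder d f 1 (oadd b ga) Q) z). split; auto.
    intros rr Hrr. destruct (Hcyc 0%nat rr Hrr) as [k [_ Hdk]].
    destruct (Hpt k) as [H1 [H2 H3]].
    exists (zs k), z. split; auto. split; auto. split; auto. split; [rewrite (d_refl d Hm); auto|].
    unfold f. rewrite H2, HGc. rewrite scale_abs. nra.
Qed.

Lemma Cprime ga : forall y, iter (delta d h eta) ga F y -> Good ga y.
Proof.
  induction ga as [|ga IH|f IH]; intros y Hy.
  - apply Good_base; auto.
  - simpl in Hy. set (T := iter (delta d h eta) ga F) in *.
    destruct (classic (Oosc d h eta T y)) as [Ho|Ho].
    + eapply OscG; eauto.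
    + apply (GL y (fun _ => OS ga) (OS ga)).
      { intros Q f x H. apply (H 0%nat). }
      intros n r Hr. destruct (Hy r Hr) as [z [Hz Hdz]].
      exists z. split; [intro E; subst; contradiction|]. split; auto.
      eapply OscG; eauto.
  - destruct (lim_split f) as [[n Hn]|Hl].
    + apply (Good_ole (OL f) (f n)); [exact Hn|]. apply IH. apply (Hy n).
    + apply (GL y f (OL f)).
      { intros Q g x H. exact H. }
      intros n r Hr. destruct (Hl n) as [m Hmn].
      pose proof (iter_delta_ole d Hm h eta _ _ F y HF Hmn (Hy m)) as Hy2. simpl in Hy2.
      destruct (Hy2 r Hr) as [z0 [Hz0 Hd0]].
      destruct (classic (z0 = y)) as [->|Hne].
      * destruct Hz0 as [_ Hosc]. destruct (Hosc r Hr) as [w [Hw [Hdw Hhw]]].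
        exists w. split.
        { intro E; subst w. replace (h y - h y) with 0 in Hhw by ring. rewrite Rabs_R0 in Hhw. lra. }
        split; auto.
      * exists z0. split; auto. split; auto. apply IH. apply Hz0.
Qed.

End Cp.


Theorem proposition4p16
  (X : Type) (d : X -> X -> R) (Hd : polish_metric d) (h : X -> R)
  (alpha xi : ord)
  (s : nat -> ord)
  (Hs_inc : forall n, olt (s n) (s (S n)))
  (Hs_lim : oeq (OL s) (oexp_omega (oexp_omega xi)))
  (P : X -> Prop) (HP : closed d P) :
  has_property d h alpha (omul (oexp_omega (oexp_omega xi)) alpha)
    (Omega_iter d h s alpha P).
Proof.
  destruct Hd as [Hm _].
  set (ze := oexp_omega (oexp_omega xi)) in *.
  unfold Omega_iter.
  induction alpha as [|a IH|f IH].
  -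
    intros x Hx eps Heps. exists (fun y => y = x), (fun _ => 1%nat).
    split; [|split; [|split]].
    + intros p Hp. apply (d_eq0 d Hm). intros r Hr. destruct (Hp r Hr) as [y [-> Hy]]. auto.
    + intros p ->. rewrite (d_refl d Hm). auto.
    + auto.
    + simpl. reflexivity.
  -
    set (F := iter (Omega d h s) a P) in *.
    assert (HF : closed d F) by apply (Omega_iter_closed d Hm h s a P HP).
    intros x Hx eps Heps. simpl in Hx. fold F in Hx.
    destruct (core_glue d Hm x 1%nat eps (fun k z Q g =>
       (exists M, forall p, Dder d (fun z => INR (g z)) 1 a Q p -> g p = M) /\
       Dder d (fun z => INR (g z) * h z) 1 (oadd (omul ze a) (s (cyc k))) Q z) Heps)
      as [zs [Qs [gs [Q [G [HPk [HQc [HQy [HQs [HGc [HQk [HD Hcyc]]]]]]]]]]]].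
    { intros k r Hr. destruct (Hx (cyc k) r Hr) as [z [[eta [Heta Hz]] [Hzx Hdz]]].
      destruct (INR_archimed eta 1 Heta) as [N HN].
      assert (HN1 : (1 <= N)%nat).
      { destruct N; [simpl in HN; lra| lia]. }
      pose proof (d_neq d Hm _ _ (not_eq_sym Hzx)).
      destruct (Cprime d Hm h F a (omul ze a) eta N HF IH Heta ltac:(lra) HN1 _ z Hz (d x z / 10))
        as [Q [g [? [? [? [? ?]]]]]]; [lra|].
      exists z, Q, g. repeat split; auto. exists N; auto. }
    exists Q, G. split; auto. split; auto. split.
    + intros y [Hy| ->]; auto.
      destruct (HD _ _ _ _ Hy) as [->|[k Hk]]; auto.
      exfalso. destruct (HPk k) as [[M HM] _].
      assert (Hk2 : Dder d (fun z => INR (gs k z)) 1 (OS a) (Qs k) y).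
      { apply (Dder_ext d (fun z => INR (G z))); auto.
        intros q Hq. destruct (HQk k q Hq) as [_ E2]. rewrite E2; auto. }
      destruct Hk2 as [_ Hk2]. destruct (Hk2 1 ltac:(lra)) as [x1 [x2 [H1 [H2 [_ [_ H3]]]]]].
      rewrite (HM x1 H1), (HM x2 H2) in H3. replace (INR M - INR M) with 0 in H3 by ring.
      rewrite Rabs_R0 in H3. lra.
    + set (fG := fun z => INR (G z) * h z).
      change (Dder d fG 1 (oadd (omul ze a) ze) Q x).
      apply Dder_add.
      apply (Dder_ole d fG 1 ze (OL s)); [apply Hs_lim|].
      intro n. apply (Dder_add d fG 1 (omul ze a) (s n) Q x).
      apply (Dder_closed d Hm _ _ _ _ HQc). intros rr Hrr.
      destruct (Hcyc n rr Hrr) as [k [Hk Hdk]]. exists (zs k). split; auto.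
      destruct (HPk k) as [_ HDk]. rewrite Hk in HDk.
      apply (Dder_mono d _ _ _ (Qs k) Q); [intros q Hq; apply (HQk k q Hq)|].
      apply (Dder_ext d (fun z => INR (gs k z) * h z)); auto.
      intros q Hq. destruct (HQk k q Hq) as [_ E2]. unfold fG. rewrite E2; auto.
  -
    intros x Hx eps Heps.
    destruct (lim_split f) as [[n Hn]|Hl].
    + destruct (IH n x (Hx n) eps Heps) as [Q [g [HQ [Hin [Hg HD]]]]].
      exists Q, g. split; auto. split; auto. split.
      * intros y [Hy| ->]; apply Hg; auto. left.
        apply (Dder_ole d _ 1 (f n) (OL f)); auto.
        eapply ole_L_r. apply ole_refl.
      * apply (Dder_ole d _ 1 (omul ze (OL f)) (omul ze (f n))); auto.
        apply omul_mono_r; auto.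
    + destruct (core_glue d Hm x 1%nat eps (fun k z Q g =>
       (forall p, Dder d (fun z => INR (g z)) 1 (f (cyc k)) Q p -> g p = 1%nat) /\
       Dder d (fun z => INR (g z) * h z) 1 (omul ze (f (cyc k))) Q z) Heps)
      as [zs [Qs [gs [Q [G [HPk [HQc [HQy [HQs [HGc [HQk [HD Hcyc]]]]]]]]]]]].
      { intros k r Hr. destruct (Hl (cyc k)) as [m Hm2].
        pose proof (Omega_iter_ole d Hm h s _ _ P x HP Hm2 (Hx m)) as Hx2. simpl in Hx2.
        pose proof (Omega_derived d Hm h s _ (Omega_iter_closed d Hm h s (f (cyc k)) P HP) x Hx2) as Hx3.
        destruct (Hx3 r Hr) as [z [Hz [Hzx Hdz]]].
        pose proof (d_neq d Hm _ _ (not_eq_sym Hzx)).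
        destruct (IH (cyc k) z Hz (d x z / 10)) as [Q [g [? [? [Hg ?]]]]]; [lra|].
        exists z, Q, g. repeat split; auto. }
      exists Q, G. split; auto. split; auto. split.
      * intros y [Hy| ->]; auto.
        destruct (HD _ _ _ _ Hy) as [->|[k Hk]]; auto.
        pose proof (Dder_sub d _ _ _ _ _ Hk) as Hyk. destruct (HQk k y Hyk) as [_ E]. rewrite E.
        destruct (HPk k) as [HPk1 _]. apply HPk1.
        apply (Dder_ext d (fun z => INR (G z))); [|apply (Hk (cyc k))].
        intros q Hq. destruct (HQk k q Hq) as [_ E2]. rewrite E2; auto.
      * intro n. apply (Dder_closed d Hm _ _ _ _ HQc). intros rr Hrr.
        destruct (Hcyc n rr Hrr) as [k [Hk Hdk]]. exists (zs k). split; auto.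
        destruct (HPk k) as [_ HDk]. rewrite Hk in HDk.
        apply (Dder_mono d _ _ _ (Qs k) Q); [intros q Hq; apply (HQk k q Hq)|].
        apply (Dder_ext d (fun z => INR (gs k z) * h z)); auto.
        intros q Hq. destruct (HQk k q Hq) as [_ E2]. rewrite E2; auto.
Qed.
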